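(* Let $\boldsymbol{R}=[r_{ij}]\in\mathbb{C}^{N\times N}$ be Hermitian. Define $\delta_1=0$ and $\delta_k=\sum_{i=1}^{k-1}|r_{ki}|$ for $k=2,\ldots,N$; define $a_k=2\delta_k+4\sum_{i=1}^{N-k}\delta_{k+i}$ for $k=1,\ldots,N-1$ and $a_N=2\delta_N$; and let $\overline{\boldsymbol{R}}=\boldsymbol{R}-\mathrm{Diag}(\boldsymbol{R})+\mathrm{diag}(a_1,\ldots,a_N)$. Let $\boldsymbol{g}\in\Omega^N$ be the output of the greedy method: $\boldsymbol{g}(1)=1$ and, for $k=1,\ldots,N-1$, $\boldsymbol{g}(k+1)$ is a maximizer over $x\in\Omega$ of $[\boldsymbol{g}(1),\ldots,\boldsymbol{g}(k),x]^H\boldsymbol{R}_{k+1}[\boldsymbol{g}(1),\ldots,\boldsymbol{g}(k),x]$. If $\mathrm{Tr}(\overline{\boldsymbol{R}})\le\mathrm{Tr}(\boldsymbol{R})$, then \[ \boldsymbol{g}^H\boldsymbol{R}\boldsymbol{g}\ \ge\ \Big(1-\frac{1}{e}\Big)\max_{\boldsymbol{s}\in\Omega^N}\boldsymbol{s}^H\boldsymbol{R}\boldsymbol{s}. \]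
   Context: $\Omega=\{x\in\mathbb{C}:|x|=1\}$. $\boldsymbol{R}_m$ denotes the principal submatrix of $\boldsymbol{R}$ formed by its first $m$ rows and first $m$ columns, and $[c_1,\ldots,c_m]$ denotes the column vector with entries $c_1,\ldots,c_m$. $\mathrm{Diag}(\boldsymbol{R})$ is the diagonal matrix with the diagonal of $\boldsymbol{R}$; $\mathrm{diag}(a_1,\ldots,a_N)$ is the diagonal matrix with entries $a_1,\ldots,a_N$. $\mathrm{Tr}$ denotes the trace. Empty sums are zero. *)

(* Defs.v *)
From HB Require Import structures.
From mathcomp Require Import all_boot all_order all_algebra.
From mathcomp Require Import complex.
From mathcomp Require Import reals.
From mathcomp Require Import sequences exp.
Set Implicit Arguments. Unset Strict Implicit. Unset Printing Implicit Defensive.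
Import Order.TTheory GRing.Theory Num.Theory.
Local Open Scope ring_scope.
Local Open Scope complex_scope.

(* Complex numbers are R[i] for R : realType (an rcfType). Indices are 0-based:
   paper index k (1..N) corresponds to i : 'I_N with val i = k-1. *)

Section Defs.
Variable R : realType.
Variable N : nat.
Implicit Types (A : 'M[R[i]]_N) (v : 'I_N -> R[i]).

Definition hermitian_mx A := forall i j : 'I_N, A j i = (A i j)^*.

Definition on_circle (x : R[i]) := `|x| = 1.

Definition quadm (m : nat) A v : R[i] :=
  \sum_(i < N | (i < m)%N) \sum_(j < N | (j < m)%N) (v i)^* * A i j * v j.

Definition quad A v : R[i] := \sum_(i < N) \sum_(j < N) (v i)^* * A i j * v j.

Definition setv v (k : 'I_N) (x : R[i]) : 'I_N -> R[i] :=
  fun i => if i == k then x else v i.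

Definition delta A (k : 'I_N) : R[i] := \sum_(i < N | (i < k)%N) `|A k i|.

(* a_k = 2 delta_k + 4 sum_{j > k} delta_j ; for the last index the sum is empty,
   giving a_N = 2 delta_N *)
Definition acoef A (k : 'I_N) : R[i] :=
  2 * delta A k + 4 * \sum_(j < N | (k < j)%N) delta A j.

Definition Rbar A : 'M[R[i]]_N :=
  \matrix_(i, j) (if i == j then acoef A i else A i j).

Definition greedy_output A v :=
  (forall i : 'I_N, on_circle (v i)) /\
  (forall i : 'I_N, nat_of_ord i = 0%N -> v i = 1) /\
  (forall k : 'I_N, (0 < k)%N -> forall x : R[i], on_circle x ->
      quadm k.+1 A (setv v k x) <= quadm k.+1 A v).

End Defs.

(* Main.v *)
Require Import Defs.
From HB Require Import structures.
From mathcomp Require Import all_boot all_order all_algebra.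
From mathcomp Require Import complex.
From mathcomp Require Import reals.
From mathcomp Require Import sequences exp.
From mathcomp Require Import ring lra.
Import Order.TTheory GRing.Theory Num.Theory.
Local Open Scope ring_scope.
Local Open Scope complex_scope.

Section S.
Variable R : realType.
Variable N : nat.
Variable A : 'M[R[i]]_N.

Lemma split_lt (k : 'I_N) (F : 'I_N -> R[i]) :
  \sum_(i < N | (i < k.+1)%N) F i = F k + \sum_(i < N | (i < k)%N) F i.
Proof.
rewrite (bigD1 k) //=; congr (_ + _); apply: eq_bigl => i.
rewrite ltnS leq_eqVlt -val_eqE /=; case: eqP => [->|_] /=; rewrite ?ltnn ?eqxx ?andbF ?andbT //.
Qed.

Lemma quadmE m v : quadm m A v =
  \sum_(i < N | (i < m)%N) \sum_(j < N | (j < m)%N) (v i)^* * A i j * v j.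
Proof. by []. Qed.

Lemma quadE v : quad A v = \sum_(i < N) \sum_(j < N) (v i)^* * A i j * v j.
Proof. by []. Qed.

Lemma quadm_S (k : 'I_N) v : quadm k.+1 A v =
  (v k)^* * A k k * v k + \sum_(j < N | (j < k)%N) (v k)^* * A k j * v j
  + \sum_(i < N | (i < k)%N) (v i)^* * A i k * v k + quadm k A v.
Proof.
rewrite !quadmE.
under eq_bigr => i _ do rewrite (split_lt k (fun j => (v i)^* * A i j * v j)).
rewrite (split_lt k (fun i => (v i)^* * A i k * v k + \sum_(j < N | (j<k)%N) (v i)^* * A i j * v j)).
rewrite big_split /=. ring.
Qed.

Lemma quadm_setv (k : 'I_N) v x : quadm k A (setv v k x) = quadm k A v.
Proof.
apply: eq_bigr => i ik; apply: eq_bigr => j jk.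
rewrite /setv; have -> : (i == k) = false by apply/negbTE; rewrite -val_eqE /= neq_ltn ik.
by have -> : (j == k) = false by apply/negbTE; rewrite -val_eqE /= neq_ltn jk.
Qed.

Lemma quadm_pm (k : 'I_N) v :
  quadm k.+1 A (setv v k 1) + quadm k.+1 A (setv v k (-1)) = 2 * (quadm k A v + A k k).
Proof.
rewrite !quadm_S !quadm_setv.
have sk : forall x, setv v k x k = x by move=> x; rewrite /setv eqxx.
have hs : forall x (j : 'I_N), (j < k)%N -> setv v k x j = v j.
  by move=> x j jk; rewrite /setv; have -> : (j == k) = false by apply/negbTE; rewrite -val_eqE /= neq_ltn jk.
rewrite !sk.
have H1 : \sum_(j < N | (j < k)%N) (1:R[i])^* * A k j * setv v k 1 j
   = - \sum_(j < N | (j < k)%N) (-1:R[i])^* * A k j * setv v k (-1) j.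
  rewrite -sumrN; apply: eq_bigr => j jk; rewrite !hs // rmorphN1 rmorph1; ring.
have H2 : \sum_(j < N | (j < k)%N) (setv v k 1 j)^* * A j k * 1
   = - \sum_(j < N | (j < k)%N) (setv v k (-1) j)^* * A j k * (-1).
  rewrite -sumrN; apply: eq_bigr => j jk; rewrite !hs //; ring.
rewrite H1 H2 rmorphN1 rmorph1; ring.
Qed.


Lemma unit_conj (x : R[i]) : on_circle x -> x^* * x = 1.
Proof. by move=> h; rewrite mulrC -normCK h expr1n. Qed.

Lemma greedy_step g (k : 'I_N) : greedy_output A g ->
  quadm k A g + A k k <= quadm k.+1 A g.
Proof.
move=> [hc [h0 hg]].
have [k0|kpos] := posnP k.
  rewrite quadm_S !quadmE !big_pred0 => [|j|j|j]; rewrite ?k0 //.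
  by rewrite !addr0 add0r mulrAC unit_conj // mul1r.
have c1 : on_circle (1 : R[i]) by rewrite /on_circle normr1.
have c2 : on_circle (-1 : R[i]) by rewrite /on_circle normrN normr1.
have := lerD (hg k kpos _ c1) (hg k kpos _ c2).
rewrite quadm_pm -mulr2n -(mulr_natl (quadm _ _ _)).
by rewrite ler_pM2l // ltr0n.
Qed.

Lemma greedy_lb g : greedy_output A g -> \tr A <= quad A g.
Proof.
move=> hg.
have H : forall m, (m <= N)%N -> \sum_(i < N | (i < m)%N) A i i <= quadm m A g.
  elim=> [|m IH] hm.
    by rewrite quadmE !big_pred0.
  pose k : 'I_N := Ordinal hm.
  have E := split_lt k (fun i => A i i).
  have := @greedy_step g k hg.
  rewrite /= in E; rewrite E /=.
  apply: le_trans; rewrite addrC lerD2r; apply: IH; exact: ltnW.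
have := H N (leqnn N).
have -> : quad A g = quadm N A g.
  rewrite quadmE quadE; symmetry; apply: eq_big => [i|i _]; rewrite ?ltn_ord //.
  by apply: eq_bigl => j; rewrite ltn_ord.
by rewrite /mxtrace (eq_bigl xpredT) // => i; rewrite ltn_ord.
Qed.


Lemma quad_offdiag s : (forall i, on_circle (s i)) ->
  quad A s = \tr A + \sum_i \sum_(j | j != i) (s i)^* * A i j * s j.
Proof.
move=> hs; rewrite quadE /mxtrace -big_split; apply: eq_bigr => i _.
by rewrite (bigD1 i) //= mulrAC unit_conj // mul1r.
Qed.

Lemma delta_ge0 k : 0 <= delta A k.
Proof. by apply: sumr_ge0 => i _; exact: normr_ge0. Qed.

Lemma offdiag_norm : hermitian_mx A ->
  \sum_i \sum_(j | j != i) `|A i j| = 2 * \sum_i delta A i.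
Proof.
move=> hA.
under eq_bigr => i _ do rewrite (bigID (fun j : 'I_N => (j < i)%N)) /=.
rewrite big_split /= mulr2n mulrDl mul1r; congr (_ + _).
  apply: eq_bigr => i _; rewrite /delta; apply: eq_bigl => j.
  by rewrite -val_eqE /=; case: ltngtP.
transitivity (\sum_(i : 'I_N) \sum_(j : 'I_N | (i < j)%N) `|A j i|).
  apply: eq_bigr => i _; apply: eq_big => j.
    by rewrite -val_eqE /=; case: ltngtP.
  by move=> _; rewrite hA normcJ.
rewrite (exchange_big_dep xpredT) //=.
Qed.

Lemma quad_real v : hermitian_mx A -> quad A v \is Num.real.
Proof.
move=> hA; rewrite CrealE; apply/eqP.
rewrite quadE rmorph_sum; under eq_bigr do rewrite rmorph_sum.
rewrite exchange_big; apply: eq_bigr => i _; apply: eq_bigr => j _.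
have hA' : Num.conj (A j i) = A i j by rewrite (hA i j) conjCK.
rewrite !rmorphM /= conjCK hA'; ring.
Qed.

Lemma tr_real : hermitian_mx A -> \tr A \is Num.real.
Proof.
move=> hA; apply: rpred_sum => i _; rewrite CrealE; apply/eqP.
exact: (esym (hA i i)).
Qed.

Lemma quad_ub s : hermitian_mx A -> (forall i, on_circle (s i)) ->
  quad A s <= \tr A + 2 * \sum_i delta A i.
Proof.
move=> hA hs.
have hq := quad_real s hA.
rewrite (@quad_offdiag s hs) in hq *; rewrite lerD2l.
set X := \sum_i _.
have hX : X \is Num.real.
  by have := rpredB hq (tr_real hA); rewrite addrAC subrr add0r.
apply: le_trans (real_ler_norm hX) _.
rewrite -offdiag_norm //; apply: le_trans (ler_norm_sum _ _ _) _.
apply: ler_sum => i _; apply: le_trans (ler_norm_sum _ _ _) _.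
apply: ler_sum => j _; rewrite !normrM normcJ (hs i) (hs j) mul1r mulr1.
exact: lexx.
Qed.

Lemma tr_Rbar (k0 : 'I_N) : nat_of_ord k0 = 0%N ->
  6 * \sum_i delta A i <= \tr (Rbar A).
Proof.
move=> h0.
have -> : \tr (Rbar A) = \sum_i acoef A i.
  by rewrite /mxtrace; apply: eq_bigr => i _; rewrite mxE eqxx.
rewrite /acoef big_split /= -!big_distrr /=.
have E : \sum_i delta A i = \sum_(j : 'I_N | (k0 < j)%N) delta A j.
  rewrite [RHS]big_mkcond; apply: eq_bigr => j _ /=; rewrite h0.
  case: posnP => // hj; by rewrite /delta big_pred0 // => i; rewrite hj ltn0.
have H : \sum_i delta A i <= \sum_(i : 'I_N) \sum_(j : 'I_N | (i < j)%N) delta A j.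
  rewrite [X in _ <= X](bigD1 k0) //= -E lerDl; apply: sumr_ge0 => i _.
  by apply: sumr_ge0 => j _; exact: delta_ge0.
have -> : (6 : R[i]) = 2 + 4 by rewrite -natrD.
by rewrite mulrDl lerD2l ler_wpM2l.
Qed.

End S.

Lemma final_ineq (F : numFieldType) (c Q T D G : F) :
  0 <= c -> 4 * c <= 3 -> 0 <= D -> Q <= T + 2 * D -> 6 * D <= T -> T <= G ->
  c * Q <= G.
Proof.
move=> hc hc3 hD hQ hDT hTG.
have hT : 0 <= T.
  apply: le_trans hDT; apply: mulr_ge0 => //; exact: ler0n.
apply: le_trans (ler_wpM2l hc hQ) _; apply: le_trans hTG.
rewrite -(ler_pM2l (x := 3)) ?ltr0n //.
have e1 : 3 * (c * (T + 2 * D)) = 3 * c * T + c * (6 * D).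
  ring.
rewrite e1; apply: le_trans (_ : 3 * c * T + c * T <= _).
  by rewrite lerD2l ler_wpM2l.
have -> : 3 * c * T + c * T = (4 * c) * T.
  ring.
by rewrite ler_wpM2r.
Qed.

Theorem theorem1 (R : realType) (N : nat) (A : 'M[R[i]]_N) (g : 'I_N -> R[i]) :
  hermitian_mx A ->
  greedy_output A g ->
  \tr (Rbar A) <= \tr A ->
  forall s : 'I_N -> R[i], (forall i : 'I_N, on_circle (s i)) ->
    ((1 - (expR (1 : R))^-1)%:C) * quad A s <= quad A g.
Proof.
move=> hA hg htr s hs.
have y1 : 1 - 2^-1 <= expR (-(2^-1) : R) by exact: expR_ge1Dx.
have ei : (expR (1:R))^-1 = expR (-(2^-1) : R) ^+ 2.
  rewrite -expRN -expRM_natr; congr expR; rewrite mulNr mulVf ?pnatr_eq0 //.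
have ele : (expR (1:R))^-1 <= 1 by rewrite -expRN expR_le1 lerN10.
have c0 : (0 : R) <= 1 - (expR (1:R))^-1 by rewrite subr_ge0.
have c3 : 4 * (1 - (expR (1:R))^-1) <= 3.
  rewrite ei; set y := expR _ in y1 *; nra.
apply: (@final_ineq _ _ _ (\tr A) (\sum_i delta A i)).
- by rewrite lecE /= eqxx /=.
- have : ((4 * (1 - (expR (1:R))^-1))%:C <= (3 : R)%:C) by rewrite lecR.
  by rewrite rmorphM !rmorph_nat.
- by apply: sumr_ge0 => i _; exact: delta_ge0.
- exact: quad_ub.
- case: N A g s hA hg htr hs => [|n] A g s hA hg htr hs.
    by rewrite /mxtrace !big_ord0 mulr0.
  exact: le_trans ((@tr_Rbar _ _ A ord0 erefl)) htr.
- exact: greedy_lb.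
Qed.
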